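(* Let $G=(V,E)$ be a connected graph, let $T$ be a spanning tree of $G$ rooted at $s$ which is an $\mathcal L$-tree of some DFS on $G$, and let $\rho$ be an arbitrary vertex order of $V$ ending in $s$. Let $\sigma$ be the order output by Ordering$(G,T,s,\rho)$. Then $T$ is an $\mathcal L$-tree of LexDFS rooted in $s$ if and only if $\sigma$ is a LexDFS order of $G$.
   Context: Graphs are finite, simple, undirected; $n=|V|$, $N(v)$ is the neighborhood of $v$. A vertex order is a linear order $\sigma=(v_1,\dots,v_n)$ of $V$; $\sigma(i)=v_i$; $u\prec_\sigma v$ means $u$ appears before $v$; $\sigma^-$ is the reverse order. DFS: a search that starts at a vertex and repeatedly visits an unvisited neighbor of the most recently visited vertex that still has an unvisited neighbor; a DFS order is any resulting order. DFS$^+(\tau)$ on a graph $H$: the DFS of $H$ starting at the last vertex of $\tau$ that, whenever several vertices may be visited next, visits the one rightmost in $\tau$. LexDFS started at $s$: label $s$ with $(0)$, all others with the empty label; for $i=1,\dots,n$ pick an unnumbered vertex $v$ with lexicographically largest label, set $\sigma(i)=v$, and prepend $i$ to the label of each unnumbered neighbor of $v$; a LexDFS order is any possible output. $\mathcal L$-tree of a vertex order $(v_1,\dots,v_n)$ of a connected graph: the spanning tree rooted at $v_1$ with an edge from each $v_i$ ($i>1$) to its rightmost neighbor $v_j$ with $j<i$. A rooted spanning tree $T$ (root $s$) is an $\mathcal L$-tree of a search $\mathcal P$ on $G$ if some $\mathcal P$-order of $G$ starting at $s$ has $\mathcal L$-tree $T$ (same edges and same root). Partition refinement: refining an ordered partition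 $(Q_1,\dots,Q_k)$ of $V$ with $S'\subseteq V$ replaces each $Q_i$ by $(Q_i\cap S',\,Q_i\setminus S')$ whenever both are nonempty. Procedure Ordering$(G,T,s,\rho)$: let $\beta$ be the reverse of a BFS order of $T$ starting at $s$; set $\mathcal Q=(V)$; for $i=1,\dots,n$, with $v=\beta(i)$, refine $\mathcal Q$ with $\{w\in N(v): w\prec_\beta v\}$; then order the vertices inside each class of $\mathcal Q$ according to $\rho^-$ and move the class $\{s\}$ to the leftmost position; let $\tau$ be the reverse of the resulting order of all vertices; output $\sigma=$ DFS$^+(\tau)$ on $T$. *)

(* Defs.v *)
(* Graphs: a finite type T of vertices with an edge relation
   e : rel T (symmetric, irreflexive). Vertex orders are sequences that are
   permutations of enum T. *)
From mathcomp Require Import all_boot.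
Set Implicit Arguments. Unset Strict Implicit. Unset Printing Implicit Defensive.

Section Defs.
Variable T : finType.

Definition vorder (s : seq T) : Prop := perm_eq s (enum T).

Definition spanning_tree (e t : rel T) : Prop :=
  subrel t e /\ symmetric t /\ (forall x y, connect t x y) /\
  #|[set p : T * T | t p.1 p.2]| = (#|T|).-1.*2.

Definition active (e : rel T) (p : seq T) : seq T :=
  [seq u <- p | [exists w, e u w && (w \notin p)]].

Definition dfs_order (e : rel T) (sigma : seq T) : Prop :=
  vorder sigma /\
  forall p v q, sigma = p ++ v :: q ->
    active e p != [::] -> e (last v (active e p)) v.

Definition bfs_order (e : rel T) (sigma : seq T) : Prop :=
  vorder sigma /\
  forall p v q, sigma = p ++ v :: q ->
    active e p != [::] -> e (head v (active e p)) v.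

Fixpoint lexle (a b : seq nat) : bool :=
  match a, b with
  | [::], _ => true
  | _ :: _, [::] => false
  | x :: a', y :: b' => (x < y) || ((x == y) && lexle a' b')
  end.

(* LexDFS label of w after the vertices of p have been numbered 1..size p
   (numbers prepended, so most recent first), for the search started at s *)
Definition lexlabel (e : rel T) (s : T) (p : seq T) (w : T) : seq nat :=
  [seq i.+1 | i <- rev (iota 0 (size p)) & e (nth w p i) w]
  ++ (if w == s then [:: 0] else [::]).

Definition lexdfs_from (e : rel T) (s : T) (sigma : seq T) : Prop :=
  vorder sigma /\
  forall p v q, sigma = p ++ v :: q ->
    forall w, w \in q -> lexle (lexlabel e s p w) (lexlabel e s p v).

Definition lexdfs_order (e : rel T) (sigma : seq T) : Prop :=
  exists s, lexdfs_from e s sigma.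

Definition lparent (e : rel T) (sigma : seq T) (x y : T) : bool :=
  let P := [seq u <- take (index y sigma) sigma | e u y] in
  (P != [::]) && (x == last x P).

Definition ltree (e : rel T) (sigma : seq T) : rel T :=
  fun x y => lparent e sigma x y || lparent e sigma y x.

Definition Ltree_of_dfs (e t : rel T) (s : T) : Prop :=
  exists sigma, [/\ dfs_order e sigma, head s sigma = s & t =2 ltree e sigma].

Definition Ltree_of_lexdfs (e t : rel T) (s : T) : Prop :=
  exists sigma, lexdfs_from e s sigma /\ t =2 ltree e sigma.

Definition refine (Q : seq {set T}) (S : {set T}) : seq {set T} :=
  flatten [seq if (A :&: S != set0) && (A :\: S != set0)
               then [:: A :&: S; A :\: S] else [:: A] | A <- Q].

(* DFS^+(tau) on the graph t: starts at the last vertex of tau; among the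
   possible next vertices, the one rightmost in tau is chosen *)
Definition dfs_plus_step (t : rel T) (tau vis : seq T) : seq T :=
  let cands u := [seq w <- tau | t u w & w \notin vis] in
  match [seq u <- rev vis | cands u != [::]] with
  | u :: _ => rcons vis (last u (cands u))
  | [::] => vis
  end.

Definition dfs_plus (t : rel T) (tau : seq T) : seq T :=
  match tau with
  | [::] => [::]
  | x :: r => iter (#|T|).-1 (dfs_plus_step t tau) [:: last x r]
  end.

(* Procedure Ordering(G,T,s,rho), where beta is the reverse of the chosen
   BFS order of T from s *)
Definition ordering (e t : rel T) (s : T) (rho beta : seq T) : seq T :=
  let Q := foldl (fun Q v =>
             refine Q [set w | e v w & index w beta < index v beta])
             [:: [set: T]] beta in
  let Q' := [set s] :: [seq A <- Q | A != [set s]] in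
  let ord := flatten [seq [seq x <- rev rho | x \in A] | A : {set T} <- Q'] in
  dfs_plus t (rev ord).

End Defs.

(* Main.v *)
Require Import Defs.
From mathcomp Require Import all_boot.
Set Implicit Arguments. Unset Strict Implicit. Unset Printing Implicit Defensive.

Section Generic.
Variable T : eqType.

Lemma pairwise_rev (r : rel T) s :
  pairwise r (rev s) = pairwise (fun x y => r y x) s.
Proof.
elim: s => //= x s IH; rewrite rev_cons pairwise_rcons IH all_rev andbC.
by [].
Qed.

Lemma pw_index (s : seq T) : uniq s -> pairwise (fun a b => index a s < index b s) s.
Proof.
case: s => // x0 s' Hu; apply/(pairwiseP x0) => i j Hi Hj Hij.
by rewrite !index_uniq.
Qed.

Lemma last_max (r : rel T) l x z : pairwise r l -> x \in l -> x != last z l -> r x (last z l).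
Proof.
case/lastP: l => // l' y; rewrite last_rcons pairwise_rcons mem_rcons inE.
move=> /andP[/allP H _] /orP[/eqP->|xin]; first by rewrite eqxx.
by move=> _; exact: H.
Qed.

Lemma last_filter_last (P : pred T) l x z : l != [::] -> P (last x l) ->
  last z (filter P l) = last x l.
Proof.
case/lastP: l => // l' y _; rewrite last_rcons filter_rcons => ->.
by rewrite last_rcons.
Qed.

Lemma last_in (l : seq T) x : l != [::] -> last x l \in l.
Proof. by case: l => // a l _; rewrite last_cons mem_last. Qed.

Lemma last_indep (l : seq T) x z : l != [::] -> last x l = last z l.
Proof. by case: l. Qed.

Lemma cat_notin (sg p q : seq T) v x : uniq sg -> sg = p ++ v :: q -> x \in v :: q -> x \notin p.
Proof.
move=> U E xin; move: U; rewrite E cat_uniq => /and3P[_ H _].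
apply/negP => xp; move/negP: H; apply; apply/hasP; by exists x.
Qed.

Lemma cat_idx_p (sg p q : seq T) v x : sg = p ++ v :: q -> x \in p -> index x sg < size p.
Proof. by move=> -> xp; rewrite index_cat xp index_mem. Qed.

Lemma cat_idx_v (sg p q : seq T) v : uniq sg -> sg = p ++ v :: q -> index v sg = size p.
Proof.
move=> U E; have := cat_notin U E (mem_head v q).
by rewrite E => H; rewrite index_pivot.
Qed.

Lemma cat_idx_q (sg p q : seq T) v x : uniq sg -> sg = p ++ v :: q -> x \in v :: q ->
  size p <= index x sg.
Proof.
move=> U E xin; have := cat_notin U E xin.
by rewrite E index_cat => /negbTE ->; rewrite leq_addr.
Qed.

Lemma index_inj_in (sg : seq T) x y : x \in sg -> index x sg = index y sg -> x = y.
Proof.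
move=> xin E; have yin : y \in sg by rewrite -index_mem -E index_mem.
by rewrite -(nth_index x xin) E nth_index.
Qed.

Lemma split_idx (sg : seq T) x : x \in sg -> sg = take (index x sg) sg ++ x :: drop (index x sg).+1 sg.
Proof.
by move=> xin; rewrite -{1}(cat_take_drop (index x sg) sg) (drop_nth x) ?nth_index ?index_mem.
Qed.

Lemma filter_split (P : pred T) r u l : [seq y <- r | P y] = u :: l ->
  exists a b, r = a ++ u :: b /\ all (predC P) a.
Proof.
elim: r => //= y r IH; case Py: (P y).
  by case=> <- _; exists [::], r.
move/IH=> [a [b [-> H]]]; exists (y :: a), b; split => //=.
by rewrite Py.
Qed.

Lemma latest (P : pred T) (p : seq T) u l x : uniq p -> [seq y <- rev p | P y] = u :: l ->
  x \in p -> P x -> x != u -> index x p < index u p.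
Proof.
move=> U /filter_split [a [b [E Ha]]] xin Px xu.
have E2 : p = rev b ++ u :: rev a by rewrite -[p]revK E rev_cat rev_cons cat_rcons.
rewrite (cat_idx_v U E2); apply: (cat_idx_p E2).
move: xin; rewrite {1}E2 mem_cat inE (negbTE xu) /= => /orP[//|xa].
by move: Ha => /allP /(_ x); rewrite -mem_rev xa /= Px => /(_ isT).
Qed.

Lemma idx_in_p (sg p r : seq T) y : sg = p ++ r -> index y sg < size p -> y \in p.
Proof.
move=> ->; rewrite index_cat; case: (y \in p) => //.
by rewrite ltnNge leq_addr.
Qed.

Lemma idx_p (sg p r : seq T) y : sg = p ++ r -> y \in p -> index y sg = index y p.
Proof. by move=> -> yp; rewrite index_cat yp. Qed.

Lemma filt_head (P : pred T) (r : seq T) u l : [seq y <- r | P y] = u :: l -> u \in r /\ P u.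
Proof.
move=> E; have : u \in [seq y <- r | P y] by rewrite E mem_head.
by rewrite mem_filter => /andP[].
Qed.

End Generic.

Lemma crossing (T : finType) (g : rel T) (A : {pred T}) a b :
  connect g a b -> a \in A -> b \notin A -> exists x z, [/\ x \in A, z \notin A & g x z].
Proof.
move/connectP=> [p]; elim: p a => [|y p IH] a /=; first by move=> _ -> ->.
move=> /andP[gay pth] Eb Aa nAb.
case Ay: (y \in A); first exact: IH y pth Eb Ay nAb.
by exists a, y; rewrite Ay.
Qed.

Fixpoint cmprR (A B : Type) (r : A -> B -> bool) (l : seq A) (w v : B) : bool :=
  if l is x :: l' then (if r x w == r x v then cmprR r l' w v else r x v) else true.

Section Cmpr.
Variables (A : eqType) (B : Type) (r : A -> B -> bool).

Lemma cmprR_refl l v : cmprR r l v v.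
Proof. by elim: l => //= x l IH; rewrite eqxx. Qed.

Lemma cmprR_trans l a b c : cmprR r l a b -> cmprR r l b c -> cmprR r l a c.
Proof.
elim: l => //= x l IH.
by case: (r x a); case: (r x b); case: (r x c) => //=; apply: IH.
Qed.

Lemma cmprR_filter l w v :
  cmprR r l w v = cmprR r (filter (fun x => r x w != r x v) l) w v.
Proof.
elim: l => //= x l IH; case E: (r x w == r x v) => /=; first by rewrite IH.
by rewrite E.
Qed.

Lemma cmprR_eq_in (r2 : A -> B -> bool) l w v :
  (forall x, x \in l -> r x w = r2 x w /\ r x v = r2 x v) ->
  cmprR r l w v = cmprR r2 l w v.
Proof.
elim: l => //= x l IH H.
have [-> ->] := H x (mem_head x l).
by rewrite IH // => y Hy; apply: H; rewrite inE Hy orbT.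
Qed.

Lemma cmprR_false l w v : (forall x, x \in l -> ~~ r x v) ->
  (exists x, x \in l /\ r x w) -> cmprR r l w v = false.
Proof.
elim: l => [|x l IH] H [y [/= Hy ryw]] //=.
have /negbTE rxv := H x (mem_head x l).
rewrite rxv; case rxw: (r x w) => //=.
apply: IH; first by move=> z Hz; apply: H; rewrite inE Hz orbT.
move: Hy; rewrite inE => /orP[/eqP E|Hy]; first by rewrite E rxw in ryw.
by exists y.
Qed.

Lemma cmprR_rcons l x w v : cmprR r (rcons l x) w v =
  if all (fun y => r y w == r y v) l then (if r x w == r x v then true else r x v)
  else cmprR r l w v.
Proof.
elim: l => //= y l IH; case: eqP => //= _.
Qed.

Lemma cmprR_same l w v : all (fun y => r y w == r y v) l -> cmprR r l w v.
Proof. by elim: l => //= y l IH /andP[-> H]; apply: IH. Qed.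

End Cmpr.

Lemma cmprR_map (A A' B : Type) (f : A' -> A) (r : A -> B -> bool) l w v :
  cmprR r (map f l) w v = cmprR (fun x => r (f x)) l w v.
Proof. by elim: l => //= x l ->. Qed.

Lemma cmprR_filterP (A B : Type) (r : A -> B -> bool) (P : pred A) l w v :
  cmprR (fun x y => r x y && P x) l w v = cmprR r (filter P l) w v.
Proof.
elim: l => //= x l IH; case: (P x) => /=; rewrite ?andbT ?andbF ?eqxx //.
by rewrite IH.
Qed.

Section Lex.
Variables (T : finType) (e : rel T) (s : T).

Definition lab (p : seq T) w := [seq i.+1 | i <- rev (iota 0 (size p)) & e (nth w p i) w].

Lemma lexlabel_lab p w : w != s -> lexlabel e s p w = lab p w.
Proof. by move=> H; rewrite /lexlabel (negbTE H) cats0. Qed.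

Lemma lab_rcons p x w : lab (rcons p x) w = (if e x w then [:: (size p).+1] else [::]) ++ lab p w.
Proof.
rewrite /lab size_rcons -addn1 iotaD rev_cat /= nth_rcons ltnn eqxx add0n.
have -> : [seq i <- rev (iota 0 (size p)) | e (nth w (rcons p x) i) w] =
          [seq i <- rev (iota 0 (size p)) | e (nth w p i) w].
  by apply: eq_in_filter => i; rewrite mem_rev mem_iota add0n /= => Hi; rewrite nth_rcons Hi.
by case: (e x w); rewrite /= ?addn1.
Qed.

Lemma lab_le p w : all (fun i => i <= size p) (lab p w).
Proof.
rewrite /lab all_map; apply/allP => i; rewrite mem_filter mem_rev mem_iota /=.
by case/andP.
Qed.

Lemma lex_cmpr p w v : w != s -> v != s ->
  lexle (lexlabel e s p w) (lexlabel e s p v) = cmprR e (rev p) w v.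
Proof.
move=> Hw Hv; rewrite !lexlabel_lab //.
elim/last_ind: p => [|p x IH] //.
rewrite !lab_rcons rev_rcons /=.
have Lw := lab_le p w; have Lv := lab_le p v.
case: (e x w); case: (e x v) => /=.
- by rewrite ltnn eqxx /= IH.
- case: (lab p v) Lv => //= y l /andP[Hy _].
  have h1 : ((size p).+1 < y) = false.
    by apply/negbTE; rewrite -leqNgt; exact: leq_trans Hy (leqnSn _).
  have h2 : ((size p).+1 == y) = false by apply/eqP => E; rewrite -E ltnn in Hy.
  by rewrite h1 h2.
- by case: (lab p w) Lw => //= y l /andP[Hy _]; rewrite ltnS Hy.
- exact: IH.
Qed.

End Lex.

Lemma pairwise_true (T : eqType) (R : rel T) (l : seq T) :
  (forall a b, a \in l -> b \in l -> R a b) -> pairwise R l.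
Proof.
elim: l => //= x l IH H; apply/andP; split.
  by apply/allP => y yl; apply: H; rewrite inE ?eqxx ?yl ?orbT.
by apply: IH => a b al bl; apply: H; rewrite inE ?al ?bl orbT.
Qed.

Section Refine.
Variable T : finType.

Definition bS (Ss : seq {set T}) (x y : T) := cmprR (fun (S : {set T}) (z : T) => z \in S) Ss y x.
Definition sameS (Ss : seq {set T}) (x y : T) := all (fun S : {set T} => (x \in S) == (y \in S)) Ss.

Definition Rq Ss : rel {set T} := fun A B =>
  [forall x : T, forall y : T, (x \in A) ==> (y \in B) ==> (bS Ss x y && ~~ sameS Ss x y)].

Definition InvQ (Q : seq {set T}) Ss :=
  [/\ (forall A, A \in Q -> forall x y : T, x \in A -> y \in A -> sameS Ss x y),
      pairwise (Rq Ss) Q & forall x : T, has (fun A : {set T} => x \in A) Q].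

Lemma sameS_sym (Ss : seq {set T}) (x y : T) : sameS Ss x y = sameS Ss y x.
Proof. by apply: eq_all => S; rewrite eq_sym. Qed.

Lemma bS_same (Ss : seq {set T}) (x y : T) : sameS Ss x y -> bS Ss x y.
Proof. by move=> H; apply: cmprR_same; rewrite -/(sameS Ss y x) sameS_sym. Qed.

Lemma bS_rcons (Ss : seq {set T}) (S : {set T}) (x y : T) : bS (rcons Ss S) x y =
  if sameS Ss x y then ((x \in S) == (y \in S)) || (x \in S) else bS Ss x y.
Proof.
rewrite /bS cmprR_rcons -/(sameS Ss y x) sameS_sym.
by case: (sameS Ss x y) => //; case: (x \in S); case: (y \in S).
Qed.

Lemma sameS_rcons (Ss : seq {set T}) (S : {set T}) (x y : T) : sameS (rcons Ss S) x y = sameS Ss x y && ((x \in S) == (y \in S)).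
Proof. by rewrite /sameS all_rcons andbC. Qed.

Definition fsplit (S A : {set T}) : seq {set T} :=
  if (A :&: S != set0) && (A :\: S != set0) then [:: A :&: S; A :\: S] else [:: A].

Lemma refineE (Q : seq {set T}) (S : {set T}) : refine Q S = flatten [seq fsplit S A | A <- Q].
Proof. by []. Qed.

Lemma fsplit_sub (S A A' : {set T}) (x : T) : A' \in fsplit S A -> x \in A' -> x \in A.
Proof.
rewrite /fsplit; case: ifP => _; last by rewrite inE => /eqP ->.
rewrite !inE => /orP[] /eqP ->; rewrite !inE; by case/andP.
Qed.

Lemma fsplit_same (S A A' : {set T}) (x y : T) : A' \in fsplit S A -> x \in A' -> y \in A' -> (x \in S) = (y \in S).
Proof.
rewrite /fsplit; case: ifP => [_|].
  rewrite !inE => /orP[] /eqP ->; rewrite !inE.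
  - by move=> /andP[_ ->] /andP[_ ->].
  - by move=> /andP[/negbTE -> _] /andP[/negbTE -> _].
move/negbT; rewrite negb_and !negbK => /orP[] /eqP E; rewrite inE => /eqP ->.
- move=> xA yA; move/setP: E => E; have := E x; have := E y; rewrite !inE xA yA ?andbT /=.
  by move=> -> ->.
- move=> xA yA; move/setP: E => E; have := E x; have := E y; rewrite !inE xA yA ?andbT /=.
  by move=> /negbFE -> /negbFE ->.
Qed.

Lemma fsplit_cover (S A : {set T}) (x : T) : x \in A -> has (fun A' : {set T} => x \in A') (fsplit S A).
Proof.
rewrite /fsplit; case: ifP => _ xA /=; last by rewrite xA.
by rewrite !inE xA; case: (x \in S).
Qed.

Lemma fsplit_pw (Ss : seq {set T}) (S A : {set T}) : (forall x y, x \in A -> y \in A -> sameS Ss x y) ->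
  pairwise (Rq (rcons Ss S)) (fsplit S A).
Proof.
move=> H; rewrite /fsplit; case: ifP => _ //=; rewrite andbT andbT.
apply/forallP => x; apply/forallP => y; rewrite !inE.
apply/implyP => /andP[xA xS]; apply/implyP => /andP[yS yA].
by rewrite bS_rcons sameS_rcons H // xS (negbTE yS).
Qed.

Lemma Inv_refine (Q Ss : seq {set T}) (S : {set T}) : InvQ Q Ss -> InvQ (refine Q S) (rcons Ss S).
Proof.
case=> I1 I2 I3; rewrite refineE; split.
- move=> A' /flatten_mapP [A AQ A'A] x y xA' yA'.
  rewrite sameS_rcons (I1 A AQ x y (fsplit_sub A'A xA') (fsplit_sub A'A yA')).
  by rewrite (fsplit_same A'A xA' yA') eqxx.
- elim: Q I1 I2 {I3} => //= A Q IH I1 /andP[HA HQ].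
  rewrite pairwise_cat; apply/and3P; split.
  + apply/allrelP => A' B' A'A /flatten_mapP [B BQ B'B].
    apply/forallP => x; apply/forallP => y; apply/implyP => xA'; apply/implyP => yB'.
    have := allP HA B BQ => /forallP /(_ x) /forallP /(_ y).
    rewrite (fsplit_sub A'A xA') (fsplit_sub B'B yB') /= => /andP[b ns].
    by rewrite bS_rcons sameS_rcons (negbTE ns) /= b.
  + by apply: fsplit_pw => x y; apply: I1; rewrite inE eqxx.
  + by apply: IH => // B BQ; apply: I1; rewrite inE BQ orbT.
- move=> x; have /hasP [A AQ xA] := I3 x.
  have /hasP [A' A'A xA'] := fsplit_cover S xA.
  by apply/hasP; exists A' => //; apply/flatten_mapP; exists A.
Qed.

Lemma Inv_fold (Sv : T -> {set T}) (l : seq T) (Q Ss : seq {set T}) : InvQ Q Ss ->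
  InvQ (foldl (fun Q v => refine Q (Sv v)) Q l) (Ss ++ map Sv l).
Proof.
elim: l Q Ss => [|v l IH] Q Ss H /=; first by rewrite cats0.
by rewrite -cat_rcons; apply: IH; apply: Inv_refine.
Qed.

Lemma Inv0 : InvQ [:: setT] [::].
Proof.
split => //; last by move=> x; rewrite /= inE.
Qed.

Lemma ord_pw (Q Ss : seq {set T}) (s : T) (rho : seq T) : InvQ Q Ss ->
  pairwise (fun a b => (a != s) ==> (b != s) ==> bS Ss a b)
    (flatten [seq [seq x <- rev rho | x \in A] | A : {set T} <- [set s] :: [seq A <- Q | A != [set s]]]).
Proof.
case=> I1 I2 _; rewrite /= pairwise_cat; apply/and3P; split.
- apply/allrelP => a b; rewrite mem_filter inE => /andP[/eqP -> _] _.
  by rewrite eqxx.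
- apply: pairwise_true => a b; rewrite mem_filter inE => /andP[/eqP -> _] _.
  by rewrite eqxx.
- have I1' : forall A, A \in [seq A <- Q | A != [set s]] -> forall x y, x \in A -> y \in A -> sameS Ss x y.
    by move=> A; rewrite mem_filter => /andP[_]; apply: I1.
  have I2' := pairwise_filter (fun A => A != [set s]) I2.
  elim: [seq A <- Q | A != [set s]] I1' I2' => //= A Q' IH J1 /andP[JA JQ].
  rewrite pairwise_cat; apply/and3P; split.
  + apply/allrelP => a b; rewrite mem_filter => /andP[aA _] /flatten_mapP [B BQ].
    rewrite mem_filter => /andP[bB _]; apply/implyP => _; apply/implyP => _.
    have := allP JA B BQ => /forallP /(_ a) /forallP /(_ b).
    by rewrite aA bB /= => /andP[].
  + apply: pairwise_true => a b; rewrite !mem_filter => /andP[aA _] /andP[bA _].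
    by rewrite bS_same ?implybT // (J1 A (mem_head _ _)).
  + by apply: IH => // B BQ; apply: J1; rewrite inE BQ orbT.
Qed.

End Refine.

From mathcomp Require Import zify.

Section RevIdx.
Variable T : eqType.

Lemma last_rev_head (l : seq T) x : last x (rev l) = head x l.
Proof. by case: l => //= a l; rewrite rev_cons last_rcons. Qed.

Lemma index_rev_sum (l : seq T) x : uniq l -> x \in l -> index x (rev l) + index x l = (size l).-1.
Proof.
elim: l => //= a l IH /andP[an U]; rewrite inE rev_cons -cats1 index_cat mem_rev.
case: (x =P a) => [->|/eqP xa] /=.
  by rewrite (negbTE an) eqxx addn0 addn0 size_rev.
rewrite eq_sym (negbTE xa) /= => xl; rewrite xl addnS IH //.
by case: (l) xl.
Qed.

Lemma index_rev_lt (l : seq T) x y : uniq l -> x \in l -> y \in l ->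
  (index x (rev l) < index y (rev l)) = (index y l < index x l).
Proof.
move=> U xl yl; have h1 := index_rev_sum U xl; have h2 := index_rev_sum U yl.
lia.
Qed.

End RevIdx.

Section Main.
Variables (T : finType) (e t : rel T) (s : T) (s0 : seq T).
Hypothesis esym : symmetric e.
Hypothesis econn : forall x y, connect e x y.
Hypothesis tconn : forall x y, connect t x y.
Hypothesis s0perm : perm_eq s0 (enum T).
Hypothesis s0head : head s s0 = s.
Hypothesis s0dfs : forall p v q, s0 = p ++ v :: q -> active e p != [::] ->
  e (last v (active e p)) v.
Hypothesis s0t : t =2 ltree e s0.

Lemma s0uniq : uniq s0.
Proof. by rewrite (perm_uniq s0perm) enum_uniq. Qed.

Lemma s0mem x : x \in s0.
Proof. by rewrite (perm_mem s0perm) mem_enum. Qed.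

Definition idx0 x := index x s0.
Definition P0 y := [seq u <- take (idx0 y) s0 | e u y].
Definition par y := last y (P0 y).

Lemma idx0_s : idx0 s = 0.
Proof.
move: s0head (s0mem s); rewrite /idx0; case: s0 => //= a l -> _.
by rewrite eqxx.
Qed.

Lemma idx0_inj x y : idx0 x = idx0 y -> x = y.
Proof.
move=> H; rewrite -(nth_index s (s0mem x)).
by rewrite -[in RHS](nth_index s (s0mem y)) -/(idx0 x) H.
Qed.

Lemma idx0_eq0 y : idx0 y = 0 -> y = s.
Proof. by move=> H; apply: idx0_inj; rewrite H idx0_s. Qed.

Lemma split0 y : s0 = take (idx0 y) s0 ++ y :: drop (idx0 y).+1 s0.
Proof.
by rewrite -{1}(cat_take_drop (idx0 y) s0) (drop_nth y) ?nth_index ?index_mem ?s0mem.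
Qed.

Lemma in_take0 x k : (x \in take k s0) = (idx0 x < k).
Proof. by rewrite in_take ?s0mem. Qed.

Lemma act_nonempty y : y != s -> active e (take (idx0 y) s0) != [::].
Proof.
move=> ys.
have sin : s \in take (idx0 y) s0.
  rewrite in_take0 idx0_s lt0n; apply/eqP => /idx0_eq0 E; by rewrite E eqxx in ys.
have ynin : y \notin take (idx0 y) s0 by rewrite in_take0 ltnn.
have [x [z [xin znin exz]]] := crossing (econn s y) sin ynin.
apply/eqP => H.
have : x \in active e (take (idx0 y) s0).
  rewrite mem_filter xin andbT; apply/existsP; exists z; by rewrite exz.
by rewrite H.
Qed.

Lemma P0_act y : y != s ->
  last y (P0 y) = last y (active e (take (idx0 y) s0)) /\ P0 y != [::].
Proof.
move=> ys; set p := take (idx0 y) s0.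
have ne := act_nonempty ys.
have ea : e (last y (active e p)) y by apply: (s0dfs (split0 y)).
have ain : last y (active e p) \in active e p by apply: last_in.
have E : P0 y = [seq u <- active e p | e u y].
  rewrite /P0 /active -filter_predI; apply: eq_in_filter => u up /=.
  case eu: (e u y) => //=; symmetry; apply/existsP; exists y.
  by rewrite eu /= /p in_take0 ltnn.
split; first by rewrite E; apply: last_filter_last.
apply/eqP => H; move: H; rewrite E => H.
have : last y (active e p) \in [seq u <- active e p | e u y] by rewrite mem_filter ea ain.
by rewrite H.
Qed.

Lemma par_s : par s = s.
Proof. by rewrite /par /P0 idx0_s take0. Qed.

Lemma par_in y : y != s -> par y \in P0 y.
Proof. by move=> ys; have [_ ne] := P0_act ys; apply: last_in. Qed.

Lemma par_e y : y != s -> e (par y) y.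
Proof. by move/par_in; rewrite mem_filter => /andP[]. Qed.

Lemma par_lt y : y != s -> idx0 (par y) < idx0 y.
Proof. by move/par_in; rewrite mem_filter in_take0 => /andP[]. Qed.

Lemma par_act y : y != s -> par y = last y (active e (take (idx0 y) s0)).
Proof. by move=> ys; have [] := P0_act ys. Qed.

Lemma lparent0 x y : lparent e s0 x y = (y != s) && (x == par y).
Proof.
rewrite /lparent -/(idx0 y) -/(P0 y).
case: (y =P s) => [->|/eqP ys] /=.
  by rewrite /P0 idx0_s take0.
have [_ ne] := P0_act ys; rewrite ne /= /par.
by rewrite (last_indep _ y ne).
Qed.

Lemma P3 x y : t x y = ((y != s) && (x == par y)) || ((x != s) && (y == par x)).
Proof. by rewrite s0t /ltree !lparent0. Qed.

Definition anc x y := fconnect par y x.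

Lemma anc_refl x : anc x x.
Proof. exact: connect0. Qed.

Lemma anc_par y : anc (par y) y.
Proof. exact: fconnect1. Qed.

Lemma anc_trans x y z : anc x y -> anc y z -> anc x z.
Proof. by rewrite /anc => H1 H2; exact: connect_trans H2 H1. Qed.

Lemma par_le y : idx0 (par y) <= idx0 y.
Proof. by case: (y =P s) => [->|/eqP /par_lt /ltnW //]; rewrite par_s. Qed.

Lemma anc_le x y : anc x y -> idx0 x <= idx0 y.
Proof.
move/connectP=> [p]; elim: p y => [|z p IH] y /=; first by move=> _ ->.
move=> /andP[/eqP E pth] Hx; subst z.
exact: leq_trans (IH _ pth Hx) (par_le y).
Qed.

Lemma anc_anti x y : anc x y -> anc y x -> x = y.
Proof.
move=> H1 H2; apply: idx0_inj; apply/eqP; by rewrite eqn_leq !anc_le.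
Qed.

Lemma anc_step x y : anc x y -> x != y -> anc x (par y).
Proof.
move/connectP=> [[|z p]] /=; first by move=> _ ->; rewrite eqxx.
move=> /andP[/eqP E pth] Hx _; subst z; apply/connectP; by exists p.
Qed.

Lemma anc_s y : anc s y.
Proof.
elim: {y}(idx0 y).+1 {-2}y (ltnSn (idx0 y)) => // n IH y Hy.
case: (y =P s) => [->|/eqP ys]; first exact: anc_refl.
apply: anc_trans (anc_par y); apply: IH.
by rewrite -ltnS; apply: leq_trans Hy; rewrite ltnS par_lt.
Qed.

Lemma anc_to_s x : anc x s -> x = s.
Proof. by move/anc_le; rewrite idx0_s leqn0 => /eqP /idx0_eq0. Qed.

Lemma anc_total x y z : anc x z -> anc y z -> anc x y || anc y x.
Proof.
elim: {z}(idx0 z).+1 {-2}z (ltnSn (idx0 z)) => // n IH z Hz Hx Hy.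
case: (x =P z) => [E|/eqP xz]; first by rewrite E Hy orbT.
case: (y =P z) => [E|/eqP yz]; first by rewrite E Hx.
have zs : z != s by apply/eqP => E; rewrite E in Hx xz; rewrite (anc_to_s Hx) eqxx in xz.
apply: (IH (par z)); last by apply: anc_step.
  by rewrite -ltnS; apply: leq_trans Hz; rewrite ltnS par_lt.
by apply: anc_step.
Qed.

Lemma not_anc_par c : c != s -> ~~ anc c (par c).
Proof. by move=> cs; apply/negP => /anc_le; rewrite leqNgt par_lt. Qed.

Lemma par_neq c : c != s -> par c != c.
Proof. by move=> cs; apply/eqP => E; move: (par_lt cs); rewrite E ltnn. Qed.

Lemma child_on_path u w : anc u w -> u != w ->
  exists c, [/\ par c = u, c != s & anc c w].
Proof.
elim: {w}(idx0 w).+1 {-2}w (ltnSn (idx0 w)) => // n IH w Hw Hu uw.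
have ws : w != s by apply/eqP => E; rewrite E in Hu uw; rewrite (anc_to_s Hu) eqxx in uw.
case: (par w =P u) => [E|/eqP pu]; first by exists w; split => //; apply: anc_refl.
have Hu' := anc_step Hu uw.
have Hlt : idx0 (par w) < n by rewrite -ltnS; apply: leq_trans Hw; rewrite ltnS par_lt.
have up : u != par w by rewrite eq_sym.
have [c [E1 E2 E3]] := IH (par w) Hlt Hu' up.
by exists c; split => //; apply: anc_trans E3 (anc_par w).
Qed.

Lemma first_out (A : {pred T}) y w : y \in A -> w \notin A -> anc y w ->
  exists z, [/\ z \notin A, par z \in A, anc y (par z) & anc z w].
Proof.
elim: {w}(idx0 w).+1 {-2}w (ltnSn (idx0 w)) => // n IH w Hw Ay nAw Hyw.
have yw : y != w by apply/eqP => E; rewrite -E Ay in nAw.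
have Hyp := anc_step Hyw yw.
case Ap: (par w \in A); first by exists w; split => //; apply: anc_refl.
have ws : w != s.
  apply/eqP => E; rewrite E in Hyw yw; by rewrite (anc_to_s Hyw) eqxx in yw.
have Hlt : idx0 (par w) < n by rewrite -ltnS; apply: leq_trans Hw; rewrite ltnS par_lt.
have [z [E1 E2 E3 E4]] := IH (par w) Hlt Ay (negbT Ap) Hyp.
by exists z; split => //; apply: anc_trans E4 (anc_par w).
Qed.

Lemma s0_pw : pairwise (fun a b => idx0 a < idx0 b) s0.
Proof. exact: pw_index s0uniq. Qed.

Lemma act_pw k : pairwise (fun a b => idx0 a < idx0 b) (active e (take k s0)).
Proof. exact: subseq_pairwise (subseq_trans (filter_subseq _ _) (take_subseq _ _)) s0_pw. Qed.

Lemma S_act a x : x \in take (idx0 a) s0 ->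
  (exists w, e x w && (w \notin take (idx0 a) s0)) -> anc x a.
Proof.
elim: {a}(idx0 a).+1 {-2}a (ltnSn (idx0 a)) => // n IH a Ha xin [w Hw].
have aS : a != s by apply/eqP => E; move: xin; rewrite E idx0_s take0.
have pa := par_act aS.
have xact : x \in active e (take (idx0 a) s0).
  by rewrite mem_filter xin andbT; apply/existsP; exists w.
case: (x =P par a) => [->|/eqP xb]; first exact: anc_par.
have lt : idx0 x < idx0 (par a).
  by rewrite pa; apply: last_max (act_pw _) xact _; rewrite -pa.
apply: anc_trans (anc_par a); apply: (IH (par a)).
- by rewrite -ltnS; apply: leq_trans Ha; rewrite ltnS par_lt.
- by rewrite in_take0.
- exists w; move: Hw => /andP[-> /=]; rewrite !in_take0 -!leqNgt => H.
  exact: leq_trans (ltnW (par_lt aS)) H.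
Qed.

Lemma normal x y : e x y -> anc x y || anc y x.
Proof.
move=> exy; case: (ltngtP (idx0 x) (idx0 y)) => H.
- apply/orP; left; apply: S_act; first by rewrite in_take0.
  by exists y; rewrite exy in_take0 ltnn.
- apply/orP; right; apply: S_act; first by rewrite in_take0.
  by exists x; rewrite esym exy in_take0 ltnn.
- by rewrite (idx0_inj H) anc_refl.
Qed.

Definition resp (sg : seq T) := forall x y, anc x y -> index x sg <= index y sg.

Lemma resp_of (sg : seq T) : (forall y, y != s -> index (par y) sg < index y sg) -> resp sg.
Proof.
move=> H x y /connectP [p]; elim: p y => [|z p IH] y /=; first by move=> _ ->.
move=> /andP[/eqP E pth] Hx; subst z; apply: leq_trans (IH _ pth Hx) _.
case: (y =P s) => [->|/eqP ys]; first by rewrite par_s.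
exact: ltnW (H y ys).
Qed.

Lemma s0_resp : resp s0.
Proof. by apply: resp_of => y ys; apply: par_lt. Qed.

Definition chain u := [seq x <- s0 | anc x u].

Lemma chain_canon (sg : seq T) u : perm_eq sg s0 -> resp sg ->
  [seq x <- sg | anc x u] = chain u.
Proof.
move=> P R.
have U : uniq sg by rewrite (perm_uniq P) s0uniq.
have srt : forall l : seq T, uniq l -> resp l -> sorted anc [seq x <- l | anc x u].
  move=> l Ul Rl; rewrite sorted_pairwise; last by move=> ? ? ?; apply: anc_trans.
  apply: (sub_in_pairwise (P := [pred x | anc x u])); last first.
    by apply: pairwise_filter; apply: pw_index.
    by apply: filter_all.
  move=> a b; rewrite !inE => Ha Hb lt.
  case/orP: (anc_total Ha Hb) => // H.
  by move: (Rl _ _ H); rewrite leqNgt lt.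
apply: (sorted_eq (leT := anc)).
- by move=> ? ? ?; apply: anc_trans.
- by move=> x y /andP[]; apply: anc_anti.
- exact: srt.
- exact: srt s0uniq s0_resp.
- exact: perm_filter.
Qed.

Lemma canonL (sg p q : seq T) v w : perm_eq sg s0 -> resp sg -> sg = p ++ v :: q -> v != s ->
  (forall x, x \in p -> e x w != e x v -> anc x (par v)) ->
  cmprR e (rev p) w v = cmprR e (rev (chain (par v))) w v.
Proof.
move=> P R E vs H.
have U : uniq sg by rewrite (perm_uniq P) s0uniq.
have mem x : x \in sg by rewrite (perm_mem P) s0mem.
rewrite cmprR_filter [RHS]cmprR_filter !filter_rev.
congr (cmprR _ (rev _) _ _).
rewrite -(chain_canon (par v) P R).
have -> : [seq x <- p | e x w != e x v] =
          [seq x <- [seq x <- p | anc x (par v)] | e x w != e x v].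
  rewrite -filter_predI; apply: eq_in_filter => x xp /=.
  by case D: (e x w != e x v) => //=; rewrite H.
congr filter.
rewrite [in RHS]E filter_cat.
have -> : [seq x <- v :: q | anc x (par v)] = [::].
  apply/eqP; rewrite -[_ == _]negbK -has_filter; apply/hasPn => x xin /=.
  apply/negP => Hx; have := R _ _ Hx.
  have i1 := cat_idx_q U E xin.
  have i2 : index (par v) sg < index v sg.
    rewrite ltn_neqAle R ?anc_par // andbT; apply/negP => /eqP /(index_inj_in (mem _)) E2.
    by move: (par_neq vs); rewrite E2 eqxx.
  rewrite (cat_idx_v U E) in i2; move: (leq_trans i2 i1).
  by rewrite ltnNge => /negbTE ->.
by rewrite cats0.
Qed.

Lemma resp_tstep (sg : seq T) : perm_eq sg s0 -> head s sg = s ->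
  (forall p v q, sg = p ++ v :: q -> p != [::] -> exists2 h, h \in p & t h v) ->
  forall y, y != s -> index (par y) sg < index y sg.
Proof.
move=> P H0 St.
have U : uniq sg by rewrite (perm_uniq P) s0uniq.
have mem x : x \in sg by rewrite (perm_mem P) s0mem.
have key : forall k x, index x sg < k -> x != s -> index (par x) sg < k.
  elim=> // k IH x; rewrite ltnS leq_eqVlt => /orP[/eqP Ek|lt] xs; last first.
    exact: ltnW (IH x lt xs).
  have E := split_idx (mem x); rewrite Ek in E.
  have pne : take k sg != [::].
    apply/eqP => E0.
    have : size (take k sg) = k by rewrite size_takel // -Ek ltnW // index_mem mem.
    rewrite E0 => k0; rewrite -k0 in Ek.
    move: xs; rewrite -(nth_index s (mem x)) Ek nth0 H0 eqxx //.
  have [h hin thx] := St _ _ _ E pne.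
  have hk : index h sg < k by rewrite -(in_take _ (mem h)).
  move: thx; rewrite P3 => /orP[/andP[_ /eqP <-]|/andP[hs /eqP Exh]].
    exact: ltnW hk.
  by move: (IH h hk hs); rewrite -Exh Ek ltnn.
move=> y ys; have := key (index y sg).+1 y (ltnSn _) ys.
rewrite ltnS leq_eqVlt => /orP[/eqP E|//].
by move: (index_inj_in (mem _) E) (par_neq ys) => ->; rewrite eqxx.
Qed.

Lemma resp_tstep' (sg : seq T) : perm_eq sg s0 -> head s sg = s ->
  (forall p v q, sg = p ++ v :: q -> p != [::] -> exists2 h, h \in p & t h v) ->
  resp sg.
Proof. by move=> P H0 St; apply: resp_of; apply: resp_tstep. Qed.

Section DP.
Variable tau : seq T.
Hypothesis tau_all : forall x, x \in tau.
Hypothesis tau_last : last s tau = s.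

Definition cands (vis : seq T) u := [seq w <- tau | t u w & w \notin vis].
Definition stepf := dfs_plus_step t tau.
Definition vis k := iter k stepf [:: s].
Definition sig := vis (#|T|).-1.

Lemma stepf_eq vs : stepf vs = match [seq u <- rev vs | cands vs u != [::]] with
  | u :: _ => rcons vs (last u (cands vs u)) | [::] => vs end.
Proof. by []. Qed.

Lemma dfs_plus_eq : dfs_plus t tau = sig.
Proof.
rewrite /dfs_plus /sig /vis /stepf; move: tau_last (tau_all s).
by case E: tau => [|x r] //= ->.
Qed.

Lemma cardT_gt0 : 0 < #|T|.
Proof. by apply/card_gt0P; exists s. Qed.

Lemma stepf_grow vs : uniq vs -> s \in vs -> size vs < #|T| ->
  exists u l, [/\ [seq u <- rev vs | cands vs u != [::]] = u :: l,
     stepf vs = rcons vs (last u (cands vs u)) & last u (cands vs u) \in cands vs u].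
Proof.
move=> U sin sz.
have [y yn] : exists y, y \notin vs.
  apply/existsP; rewrite -[X in is_true X]negbK negb_exists; apply/negP => /forallP H.
  have := uniq_leq_size (enum_uniq T) (s2 := vs) (fun x _ => negbNE (H x)).
  by rewrite -cardT leqNgt sz.
have [x [z [xin zn txz]]] := crossing (tconn s y) sin yn.
have cne : cands vs x != [::].
  apply/eqP => E; have : z \in cands vs x by rewrite mem_filter txz zn tau_all.
  by rewrite E.
case E: [seq u <- rev vs | cands vs u != [::]] => [|u l].
  have : x \in [seq u <- rev vs | cands vs u != [::]] by rewrite mem_filter cne mem_rev xin.
  by rewrite E.
have : u \in [seq u <- rev vs | cands vs u != [::]] by rewrite E mem_head.
rewrite mem_filter => /andP[une _].
exists u, l; split => //; first by rewrite stepf_eq E.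
exact: last_in.
Qed.

Lemma vis_prop k : k < #|T| -> [/\ size (vis k) = k.+1, uniq (vis k) & head s (vis k) = s].
Proof.
elim: k => [|k IH] lt; first by [].
have [sz U H] := IH (ltnW lt).
have sin : s \in vis k by case: (vis k) H sz => //= a l -> _; rewrite mem_head.
have szl : size (vis k) < #|T| by rewrite sz.
have [u [l [_ E ln]]] := stepf_grow U sin szl.
rewrite /vis iterS -/(vis k) E size_rcons sz rcons_uniq U andbT.
split => //.
- by move: ln; rewrite mem_filter => /andP[/andP[_ ->]].
- by case: (vis k) H sz => //.
Qed.

Lemma vis_take k m : k <= m -> m < #|T| -> vis k = take k.+1 (vis m).
Proof.
move=> km; elim: m km => [|m IH] km lt.
  by rewrite leqn0 in km; rewrite (eqP km) /=.
move: km; rewrite leq_eqVlt => /orP[/eqP ->|km].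
  by have [sz _ _] := vis_prop lt; rewrite -sz take_size.
have [sz U H] := vis_prop (ltnW lt).
have sin : s \in vis m by case: (vis m) H sz => //= a l -> _; rewrite mem_head.
have szl : size (vis m) < #|T| by rewrite sz.
have [u [l [_ E ln]]] := stepf_grow U sin szl.
rewrite /vis iterS -/(vis m) E -cats1 take_cat sz.
move: km; rewrite ltnS leq_eqVlt => /orP[/eqP ->|km']; first by rewrite ltnn subnn take0 cats0.
rewrite ltnS km'; exact: IH (ltnW km') (ltnW lt).
Qed.

Lemma sig_prop : [/\ size sig = #|T|, uniq sig & head s sig = s].
Proof.
have lt : (#|T|).-1 < #|T| by rewrite prednK ?cardT_gt0.
by have [-> ? ?] := vis_prop lt; rewrite prednK ?cardT_gt0.
Qed.

Lemma sig_perm : perm_eq sig s0.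
Proof.
have [sz U _] := sig_prop.
apply: uniq_perm => //; first exact: s0uniq.
have szl : size (enum T) <= size sig by rewrite sz cardT.
have [_ E] := uniq_min_size U (s2 := enum T) (fun x _ => mem_enum _ x) szl.
by move=> x; rewrite E mem_enum s0mem.
Qed.

Lemma sig_take k : k < #|T| -> take k.+1 sig = vis k.
Proof. by move=> lt; rewrite (vis_take (m := (#|T|).-1)) // -ltnS prednK ?cardT_gt0. Qed.

Lemma STEP p v q : sig = p ++ v :: q -> p != [::] ->
  exists u l, [/\ [seq u <- rev p | cands p u != [::]] = u :: l,
    v = last u (cands p u) & v \in cands p u].
Proof.
move=> E pne.
have [sz U H] := sig_prop.
have lt : size p < #|T| by rewrite -sz E size_cat /= addnS ltnS leq_addr.
have k1 : 0 < size p by rewrite lt0n size_eq0.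
have lt' : (size p).-1 < #|T| by apply: leq_ltn_trans (leq_pred _) lt.
have Ep : p = vis (size p).-1.
  by rewrite -(sig_take lt') prednK // E take_size_cat.
have Epv : rcons p v = vis (size p).
  by rewrite -(sig_take lt) E -cat_rcons take_size_cat // size_rcons.
have [sz' Up Hp] := vis_prop lt'.
rewrite -Ep in sz' Up Hp.
have sin : s \in p by case: (p) Hp pne => //= a l -> _; rewrite mem_head.
have [u [l [E1 E2 E3]]] := stepf_grow Up sin lt.
have : rcons p v = stepf p by rewrite Epv {2}Ep /vis -iterS prednK.
rewrite E2 => /rcons_inj [->]; exists u, l; split => //.
Qed.

Lemma sig_resp_idx y : y != s -> index (par y) sig < index y sig.
Proof.
have [_ _ H] := sig_prop.
apply: resp_tstep => //; first exact: sig_perm.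
move=> p v q E pne; have [u [l [E1 _ E3]]] := STEP E pne.
have [] := filt_head E1; rewrite mem_rev => up _.
exists u => //.
by move: E3; rewrite mem_filter => /andP[/andP[]].
Qed.

Lemma sig_resp : resp sig.
Proof. by apply: resp_of; apply: sig_resp_idx. Qed.

Lemma sig_uniq : uniq sig.
Proof. by have [] := sig_prop. Qed.

Lemma sig_mem x : x \in sig.
Proof. by rewrite (perm_mem sig_perm) s0mem. Qed.

Lemma sig_closed p r x : sig = p ++ r -> x \in p -> x != s -> par x \in p.
Proof.
move=> E xp xs; apply: (idx_in_p E).
apply: ltn_trans (sig_resp_idx xs) _.
by rewrite (idx_p E xp) index_mem.
Qed.

Lemma sig_s_in p v q : sig = p ++ v :: q -> p != [::] -> s \in p.
Proof.
have [_ _ H] := sig_prop.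
by move=> E; rewrite E in H; case: (p) H => //= a l -> _; rewrite mem_head.
Qed.

Lemma STEP2 p v q : sig = p ++ v :: q -> p != [::] ->
  exists u l, [/\ [seq u <- rev p | cands p u != [::]] = u :: l,
    v = last u (cands p u), v \in cands p u & par v = u].
Proof.
move=> E pne; have [u [l [E1 E2 E3]]] := STEP E pne.
exists u, l; split => //.
have [up _] := filt_head E1; rewrite mem_rev in up.
move: E3; rewrite mem_filter => /andP[/andP[tuv vn] _].
move: tuv; rewrite P3 => /orP[/andP[_ /eqP ->] //|/andP[us /eqP Ev]].
by move: (sig_closed E up us); rewrite -Ev (negbTE vn).
Qed.

Definition Stk (p : seq T) := forall x, x \in p -> cands p x != [::] -> anc x (last s p).

Lemma cands_sub p v x : cands (rcons p v) x != [::] -> cands p x != [::].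
Proof.
case E: (cands (rcons p v) x) => [|w l] // _.
have : w \in cands (rcons p v) x by rewrite E mem_head.
rewrite !mem_filter mem_rcons inE negb_or => /andP[/andP[txw /andP[_ wp]] wt].
have : w \in cands p x by rewrite mem_filter txw wp wt.
by case: (cands p x).
Qed.

Lemma sig_Stk k : 0 < k -> k <= #|T| -> Stk (take k sig).
Proof.
have [sz U H] := sig_prop.
elim: k => // k IH _ lt.
case: (posnP k) => [->|kpos].
  rewrite /Stk; case: (sig) H => //= a l -> x; rewrite take0 inE => /eqP -> _.
  exact: anc_refl.
have ksz : k < size sig by rewrite sz.
set p := take k sig; set v := nth s sig k.
have E : sig = p ++ v :: drop k.+1 sig by rewrite -(drop_nth s ksz) cat_take_drop.
have pne : p != [::] by rewrite -size_eq0 size_takel ?(ltnW ksz) // -lt0n.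
have [u [l [E1 E2 E3 E4]]] := STEP2 E pne.
have Up : uniq p by apply: take_uniq.
have Sp := IH kpos (ltnW lt).
rewrite (take_nth s ksz) -/p -/v => x; rewrite mem_rcons inE last_rcons => /orP[/eqP ->|xp] cx.
  exact: anc_refl.
have cx' := cands_sub cx.
have [up cu] := filt_head E1; rewrite mem_rev in up.
have Hx := Sp x xp cx'; have Hu := Sp u up cu.
case/orP: (anc_total Hx Hu) => H1; first by rewrite -E4 in H1; apply: anc_trans H1 (anc_par v).
case: (x =P u) => [->|/eqP xu]; first by rewrite -E4; apply: anc_par.
have := latest Up E1 xp cx' xu.
rewrite -(idx_p E xp) -(idx_p E up) ltnNge.
by rewrite sig_resp.
Qed.

Lemma sig_PO p v q y w : sig = p ++ v :: q -> y \in p -> w \in q -> anc y w -> anc y v.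
Proof.
move=> E yp wq Hyw.
have pne : p != [::] by case: (p) yp.
have [u [l [E1 E2 E3 E4]]] := STEP2 E pne.
have wn : w \notin p by apply: (cat_notin sig_uniq E); rewrite inE wq orbT.
have [z [zn pz Hyz Hzw]] := first_out yp wn Hyw.
have sin := sig_s_in E pne.
have zs : z != s by apply/eqP => Ez; rewrite Ez sin in zn.
have cz : cands p (par z) != [::].
  apply/eqP => C; have : z \in cands p (par z) by rewrite mem_filter P3 zs eqxx zn tau_all.
  by rewrite C.
have [up cu] := filt_head E1; rewrite mem_rev in up.
have psz : p = take (size p) sig by rewrite E take_size_cat.
have Sp : Stk p.
  rewrite psz; apply: sig_Stk; first by rewrite lt0n size_eq0.
  by have [sz _ _] := sig_prop; rewrite -sz E size_cat leq_addr.
have H1 := Sp _ pz cz; have H2 := Sp _ up cu.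
case/orP: (anc_total H1 H2) => H3.
  by rewrite -E4 in H3; apply: anc_trans (anc_trans Hyz H3) (anc_par v).
case: (par z =P u) => [Ez|/eqP zu].
  by rewrite Ez -E4 in Hyz; apply: anc_trans Hyz (anc_par v).
have Up : uniq p by move: sig_uniq; rewrite E cat_uniq => /andP[].
have := latest Up E1 pz cz zu.
by rewrite -(idx_p E pz) -(idx_p E up) ltnNge sig_resp.
Qed.

Lemma sig_sibling (R : rel T) c1 c2 : pairwise R tau -> c1 != s -> c2 != s ->
  par c1 = par c2 -> c1 != c2 -> index c1 sig < index c2 sig -> R c2 c1.
Proof.
move=> pw c1s c2s Ep c12 lt.
have E := split_idx (sig_mem c1).
set p := take (index c1 sig) sig in E.
have pne : p != [::].
  apply/eqP => p0; move: E; rewrite p0 /= => E.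
  by have [_ _ H] := sig_prop; rewrite E /= in H; rewrite H eqxx in c1s.
have [u [l [E1 E2 E3 E4]]] := STEP2 E pne.
have c2n : c2 \notin p by rewrite /p in_take ?sig_mem // -leqNgt ltnW.
have c2in : c2 \in cands p u by rewrite mem_filter P3 c2s -Ep E4 eqxx c2n tau_all.
have pwc : pairwise R (cands p u) by apply: pairwise_filter.
move: E2 c2in pwc; case/lastP: (cands p u) => [|l' x] //; rewrite last_rcons => <-.
rewrite mem_rcons inE eq_sym (negbTE c12) /= pairwise_rcons.
by move=> c2l /andP[/allP /(_ _ c2l)].
Qed.

End DP.

Lemma ltree_of (sg : seq T) : perm_eq sg s0 -> resp sg -> head s sg = s -> t =2 ltree e sg.
Proof.
move=> P R H0.
have U : uniq sg by rewrite (perm_uniq P) s0uniq.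
have mem x : x \in sg by rewrite (perm_mem P) s0mem.
have lp : forall x y, lparent e sg x y = (y != s) && (x == par y).
  move=> x y; rewrite /lparent.
  case: (y =P s) => [->|/eqP ys] /=.
    by case: (sg) H0 => //= a l ->; rewrite eqxx take0.
  set P' := [seq u <- take (index y sg) sg | e u y].
  have lt : index (par y) sg < index y sg.
    rewrite ltn_neqAle R ?anc_par // andbT.
    apply/negP => /eqP /(index_inj_in (mem _)) E; by move: (par_neq ys); rewrite E eqxx.
  have pin : par y \in P' by rewrite mem_filter par_e // in_take.
  have ne : P' != [::] by case: (P') pin.
  rewrite ne /=; rewrite (last_indep _ (par y) ne).
  set L := last (par y) P'.
  have Lin : L \in P' by apply: last_in.
  suff -> : L = par y by [].
  case: (L =P par y) => // NL; exfalso.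
  have pw : pairwise (fun a b => index a sg < index b sg) P'.
    exact: subseq_pairwise (subseq_trans (filter_subseq _ _) (take_subseq _ _)) (pw_index U).
  have i1 : index (par y) sg < index L sg.
    apply: last_max pw pin _; apply/eqP => E; apply: NL; by rewrite /L -E.
  move: Lin; rewrite mem_filter in_take // => /andP[eL iL].
  case/orP: (normal eL) => H.
    have Ly : L != y by apply/eqP => E; rewrite E ltnn in iL.
    by move: (R _ _ (anc_step H Ly)); rewrite leqNgt i1.
  by move: (R _ _ H); rewrite leqNgt iL.
by move=> x y; rewrite /ltree !lp P3.
Qed.

Definition D u w v := cmprR e (rev (chain u)) w v.

Lemma chain_last u : exists l, rev (chain u) = u :: l.
Proof.
rewrite /chain {1}(split0 u) filter_cat /= anc_refl.
have -> : [seq x <- drop (idx0 u).+1 s0 | anc x u] = [::].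
  apply/eqP; rewrite -[_ == _]negbK -has_filter; apply/hasPn => x xin.
  apply/negP => /anc_le H.
  have U := s0uniq; rewrite -(cat_take_drop (idx0 u).+1 s0) cat_uniq in U.
  case/and3P: U => _ /hasPn /(_ x xin) xn _.
  by move: xn; rewrite in_take0 ltnS H.
by exists (rev [seq x <- take (idx0 u) s0 | anc x u]); rewrite rev_cat.
Qed.

Lemma lex_head x sg : lexdfs_from e x sg -> head x sg = x.
Proof.
case=> P H; have xin : x \in sg by rewrite (perm_mem P) mem_enum.
case: sg P H xin => // v q P H xin /=.
case: (v =P x) => // /eqP vx.
have xq : x \in q by move: xin; rewrite inE eq_sym (negbTE vx).
have := H [::] v q erefl x xq.
by rewrite /lexlabel /= eqxx (negbTE vx).
Qed.

Lemma lex_perm sg : lexdfs_from e s sg -> perm_eq sg s0.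
Proof. by case=> P _; apply: perm_trans P _; rewrite perm_sym. Qed.

Lemma lex_tstep sg : lexdfs_from e s sg -> t =2 ltree e sg ->
  forall p v q, sg = p ++ v :: q -> p != [::] -> exists2 h, h \in p & t h v.
Proof.
move=> L Ht p v q E pne.
have H0 := lex_head L; have P := lex_perm L; case: L => _ H.
have U : uniq sg by rewrite (perm_uniq P) s0uniq.
have mem x : x \in sg by rewrite (perm_mem P) s0mem.
have sin : s \in p by move: H0; rewrite E; case: (p) pne => //= a l _ ->; rewrite mem_head.
have vn : v \notin p by apply: (cat_notin U E); rewrite mem_head.
have vs : v != s by apply/eqP => vs; rewrite vs sin in vn.
case hv: (has (e^~ v) p).
  have tk : take (index v sg) sg = p by rewrite (cat_idx_v U E) E take_size_cat.
  set P' := [seq u <- p | e u v].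
  have ne : P' != [::] by rewrite -has_filter.
  exists (last v P'); first by have := last_in v ne; rewrite mem_filter => /andP[].
  rewrite Ht /ltree /lparent tk -/P'; apply/orP; left; rewrite ne /=.
  by apply/eqP; apply: last_indep.
have [x [z [xp zn exz]]] := crossing (econn s v) sin vn.
have : z \in sg by apply: mem.
rewrite E mem_cat (negbTE zn) /= inE => /orP[/eqP zv|zq].
  by move: hv; rewrite -zv => /negbT /hasPn /(_ x xp); rewrite exz.
have zs : z != s by apply/eqP => zs; rewrite zs sin in zn.
have := H p v q E z zq; rewrite lex_cmpr // cmprR_false //.
  by move=> y; rewrite mem_rev => yp; move: hv => /negbT /hasPn /(_ y yp).
by exists x; rewrite mem_rev.
Qed.

Lemma lex_resp sg : lexdfs_from e s sg -> t =2 ltree e sg -> resp sg.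
Proof.
move=> L Ht; apply: resp_tstep'; [exact: lex_perm L | exact: lex_head L | exact: lex_tstep].
Qed.

Lemma C1 sg : lexdfs_from e s sg -> t =2 ltree e sg ->
  forall c w, c != s -> anc c w -> D (par c) w c.
Proof.
move=> L Ht c w cs Hcw.
have R := lex_resp L Ht; have P := lex_perm L.
have U : uniq sg by rewrite (perm_uniq P) s0uniq.
have mem x : x \in sg by rewrite (perm_mem P) s0mem.
case: (w =P c) => [->|/eqP wc]; first exact: cmprR_refl.
have E := split_idx (mem c); set p := take (index c sg) sg in E.
have wq : w \in drop (index c sg).+1 sg.
  have : w \in sg by [].
  rewrite {1}E mem_cat inE (negbTE wc) /= => /orP[|//].
  by rewrite /p in_take // ltnNge R.
have ws : w != s by apply/eqP => ws; rewrite ws in Hcw; rewrite (anc_to_s Hcw) eqxx in cs.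
case: L => _ H.
have := H _ _ _ E w wq; rewrite lex_cmpr // => Hc.
rewrite /D -(canonL P R E cs) //.
move=> x xp; have ix : index x sg < index c sg by rewrite -(in_take _ (mem x)).
case exc: (e x c) => /=.
  move=> _; case/orP: (normal exc) => Hx.
    by apply: anc_step Hx _; apply/eqP => E1; rewrite E1 ltnn in ix.
  by move: (R _ _ Hx); rewrite leqNgt ix.
case exw: (e x w) => // _; case/orP: (normal exw) => Hx.
  case/orP: (anc_total Hx Hcw) => Hx'.
    by apply: anc_step Hx' _; apply/eqP => E1; rewrite E1 ltnn in ix.
  by move: (R _ _ Hx'); rewrite leqNgt ix.
move: (R _ _ Hx) (R _ _ Hcw) => h1 h2.
by move: (leq_ltn_trans h2 (leq_ltn_trans h1 ix)); rewrite ltnn.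
Qed.

Lemma bfs_tstep bfs : bfs_order t bfs -> head s bfs = s ->
  forall p v q, bfs = p ++ v :: q -> p != [::] -> exists2 h, h \in p & t h v.
Proof.
case=> P H H0 p v q E pne.
have U : uniq bfs by rewrite (perm_uniq P) enum_uniq.
have sin : s \in p by move: H0; rewrite E; case: (p) pne => //= a l _ ->; rewrite mem_head.
have vn : v \notin p by apply: (cat_notin U E); rewrite mem_head.
have [x [z [xp zn txz]]] := crossing (tconn s v) sin vn.
have ne : active t p != [::].
  apply/eqP => C; have : x \in active t p.
    by rewrite mem_filter xp andbT; apply/existsP; exists z; rewrite txz.
  by rewrite C.
exists (head v (active t p)); last exact: H E ne.
by case: (active t p) ne (filter_subseq _ p : subseq (active t p) p) => // a l _ /mem_subseq; apply; rewrite mem_head.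
Qed.

Lemma bfs_perm bfs : bfs_order t bfs -> perm_eq bfs s0.
Proof. by case=> P _; apply: perm_trans P _; rewrite perm_sym. Qed.

Lemma Sv_mem (bfs : seq T) z x : perm_eq bfs s0 -> resp bfs -> z != s ->
  (z \in [set w | e x w & index w (rev bfs) < index x (rev bfs)]) = e x z && anc x (par z).
Proof.
move=> P R zs.
have U : uniq bfs by rewrite (perm_uniq P) s0uniq.
have mem y : y \in bfs by rewrite (perm_mem P) s0mem.
rewrite inE index_rev_lt //; case exz: (e x z) => //=.
apply/idP/idP => H.
  case/orP: (normal exz) => Hx.
    by apply: anc_step Hx _; apply/eqP => E1; rewrite E1 ltnn in H.
  by move: (R _ _ Hx); rewrite leqNgt H.
have Hxz := anc_trans H (anc_par z).
rewrite ltn_neqAle R // andbT; apply/negP => /eqP /(index_inj_in (mem _)) E1.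
by rewrite E1 in H; move: (not_anc_par zs); rewrite H.
Qed.

Lemma BRIDGE (bfs : seq T) v c : perm_eq bfs s0 -> resp bfs -> v != s -> c != s ->
  par v = par c ->
  bS [seq [set w | e x w & index w (rev bfs) < index x (rev bfs)] | x <- rev bfs] v c ->
  D (par v) c v.
Proof.
move=> P R vs cs Ep; rewrite /bS cmprR_map /D.
rewrite (cmprR_eq_in (r2 := fun x z => e x z && anc x (par v))).
  by rewrite cmprR_filterP filter_rev (chain_canon _ P R).
by move=> x _; rewrite !Sv_mem // Ep.
Qed.

Lemma main_inner (rho bfs : seq T) : vorder rho -> last s rho = s ->
  bfs_order t bfs -> head s bfs = s ->
  (Ltree_of_lexdfs e t s <-> lexdfs_order e (ordering e t s rho (rev bfs))).
Proof.
move=> rhoP rhoL bfsP bfsH.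
have [r' Er] : exists r', rev rho = s :: r'.
  move: rhoP rhoL; case/lastP: rho => [|r a] P L.
    by have := perm_mem P s; rewrite mem_enum.
  by exists (rev r); rewrite rev_rcons -L last_rcons.
set beta := rev bfs.
pose Sv := fun v => [set w | e v w & index w beta < index v beta].
pose Q := foldl (fun Q v => refine Q (Sv v)) [:: setT] beta.
pose ord := flatten [seq [seq x <- rev rho | x \in A] | A : {set T} <- [set s] :: [seq A <- Q | A != [set s]]].
have Hord : ordering e t s rho beta = dfs_plus t (rev ord) by [].
have IQ : InvQ Q (map Sv beta) := Inv_fold Sv beta (@Inv0 T).
pose R0 := fun a b => (a != s) ==> (b != s) ==> bS (map Sv beta) a b.
have PW : pairwise R0 ord by apply: ord_pw.
have tau_all : forall x, x \in rev ord.
  move=> x; rewrite mem_rev; apply/flatten_mapP.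
  case: (x =P s) => [->|/eqP xs].
    by exists [set s]; rewrite ?mem_head // Er /= inE eqxx mem_head.
  case: IQ => _ _ /(_ x) /hasP [A AQ xA].
  exists A; last by rewrite mem_filter xA mem_rev (perm_mem rhoP) mem_enum.
  rewrite inE mem_filter AQ andbT; apply/orP; right; apply/eqP => EA.
  by move: xA; rewrite EA inE (negbTE xs).
have tau_last : last s (rev ord) = s by rewrite last_rev_head /ord /= Er /= inE eqxx.
have PWt : pairwise (fun a b => R0 b a) (rev ord) by rewrite pairwise_rev.
rewrite Hord (dfs_plus_eq tau_all tau_last).
have [sz U H0] := sig_prop tau_all.
have Pb := bfs_perm bfsP.
have Rb := resp_tstep' Pb bfsH (bfs_tstep bfsP bfsH).
have SP := sig_perm tau_all.
have SR := sig_resp tau_all.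
split.
- case=> tau' [L Ht]; exists s; split.
    by apply: perm_trans SP _.
  move=> p v q E w wq.
  have mem x : x \in sig (rev ord) by rewrite (perm_mem SP) s0mem.
  case: (p =P [::]) => [p0|/eqP pne].
    subst p; move: H0; rewrite E /= => vs; subst v.
    have ws : w != s by apply/eqP => ws; move: U; rewrite E /= -ws wq.
    by rewrite /lexlabel /= (negbTE ws).
  have sin := sig_s_in tau_all E pne.
  have vn : v \notin p by apply: (cat_notin U E); rewrite mem_head.
  have vs : v != s by apply/eqP => vs; rewrite vs sin in vn.
  have wn : w \notin p by apply: (cat_notin U E); rewrite inE wq orbT.
  have ws : w != s by apply/eqP => ws; rewrite ws sin in wn.
  have iv := cat_idx_v U E.
  have iw : index v (sig (rev ord)) < index w (sig (rev ord)).
    have wq' : w \in v :: q by rewrite in_cons wq orbT.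
    rewrite iv ltn_neqAle (cat_idx_q U E wq') andbT.
    apply/eqP => E1; rewrite -iv in E1; have := index_inj_in (mem v) E1.
    move=> Evw; rewrite -Evw in wq; move: U; rewrite E cat_uniq /= wq /=.
    by rewrite !andbF.
  rewrite lex_cmpr // (canonL SP SR E vs).
    set u := par v.
    have ulv : index u (sig (rev ord)) < index v (sig (rev ord)) by apply: sig_resp_idx.
    case: (boolP (anc u w)) => Huw.
      have uw : u != w by apply/eqP => Euw; rewrite Euw in ulv; move: (ltn_trans ulv iw); rewrite ltnn.
      have [c [Ec cs Hcw]] := child_on_path Huw uw.
      case: (c =P v) => [Ecv|/eqP cv].
        by rewrite Ecv in Hcw; apply: (C1 L Ht vs Hcw).
      have lt : index v (sig (rev ord)) < index c (sig (rev ord)).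
        have cn : c \notin p.
          apply/negP => cp; have := sig_PO tau_all E cp wq Hcw => Hcv.
          have := anc_step Hcv cv; rewrite -/u -Ec => H; by move: (not_anc_par cs); rewrite H.
        have cin : c \in v :: q by move: (mem c); rewrite E mem_cat (negbTE cn).
        rewrite iv ltn_neqAle (cat_idx_q U E cin) andbT.
        apply/eqP => E1; rewrite -iv in E1; have := index_inj_in (mem v) E1.
        by move=> Evc; rewrite Evc eqxx in cv.
      have Ep : par v = par c by rewrite Ec.
      have vc : v != c by rewrite eq_sym.
      have := sig_sibling tau_all PWt vs cs Ep vc lt.
      rewrite /R0 vs cs /= => B.
      have D1 := BRIDGE Pb Rb vs cs Ep B.
      have D2 := C1 L Ht cs Hcw; rewrite -Ep in D2.
      exact: cmprR_trans D2 D1.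
    have [l El] := chain_last u.
    rewrite /D El /= par_e //.
    case euw: (e u w) => //.
    case/orP: (normal euw) => H; first by rewrite H in Huw.
    by move: (SR _ _ H); rewrite leqNgt (ltn_trans ulv iw).
  move=> x xp; have ix : index x (sig (rev ord)) < index v (sig (rev ord)) by rewrite iv (cat_idx_p E xp).
  case exv: (e x v) => /=.
    move=> _; case/orP: (normal exv) => Hx.
      by apply: anc_step Hx _; apply/eqP => E1; rewrite E1 ltnn in ix.
    by move: (SR _ _ Hx); rewrite leqNgt ix.
  case exw: (e x w) => // _; case/orP: (normal exw) => Hx.
    apply: anc_step (sig_PO tau_all E xp wq Hx) _.
    by apply/eqP => E1; rewrite E1 ltnn in ix.
  by move: (SR _ _ Hx); rewrite leqNgt (ltn_trans ix iw).
- case=> s' L.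
  have Es : s' = s.
    move: (lex_head L) H0 sz; case: (sig (rev ord)) => [|a l] /=.
      by move=> _ _ E0; move: cardT_gt0; rewrite -E0.
    by move=> -> ->.
  subst s'; exists (sig (rev ord)); split => //.
  exact: ltree_of SP SR H0.
Qed.

End Main.

Theorem theorem7 (T : finType) (e t : rel T) (s : T) (rho bfs : seq T) :
  symmetric e -> irreflexive e -> (forall x y, connect e x y) ->
  spanning_tree e t ->
  Ltree_of_dfs e t s ->
  vorder rho -> last s rho = s ->
  bfs_order t bfs -> head s bfs = s ->
  (Ltree_of_lexdfs e t s <-> lexdfs_order e (ordering e t s rho (rev bfs))).
Proof.
move=> esym _ econn [_ [_ [tconn _]]] [s0 [[s0perm s0dfs] s0head s0t]].
exact: (main_inner esym econn tconn s0perm s0head s0dfs s0t).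
Qed.
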